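(* The map from $\mathcal L_n$ to $\mathcal T_n$ which orders the children of each vertex according to their labels (increasingly) and then removes all labels is a bijection.
   Context: A rooted tree with vertex set $\{0,\dots,n\}$ is naturally labeled if labels increase towards the root and, for each $i$, all children of $i$ have labels smaller than all children of $i+1$; $\mathcal L_n$ is the set of such trees. An ordered rooted tree is an unlabeled rooted tree together with a linear order on the children of each vertex; $\mathcal T_n$ is the set of ordered rooted trees with $n+1$ vertices. *)

(* Defs.v *)
From mathcomp Require Import all_boot.
Set Implicit Arguments. Unset Strict Implicit. Unset Printing Implicit Defensive.

Inductive otree := ONode of seq otree.

Fixpoint osize (t : otree) : nat :=
  let: ONode ts := t in (sumn (map osize ts)).+1.

Definition in_T (n : nat) (t : otree) : Prop := osize t = n.+1.

(* A rooted tree on the vertex set {0,...,n} = 'I_n.+1 is given by its root r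
   and its parent map p (with p r = r): every vertex reaches r by following
   parents (n steps suffice). *)
Definition LTree (n : nat) : Type := ('I_n.+1 * {ffun 'I_n.+1 -> 'I_n.+1})%type.

Definition is_rooted_tree n (T : LTree n) : bool :=
  let: (r, p) := T in (p r == r) && [forall v, iter n p v == r].

Definition increasing_to_root n (T : LTree n) : bool :=
  let: (r, p) := T in [forall v, (v != r) ==> (v < p v)].

Definition children_ordered n (T : LTree n) : bool :=
  let: (r, p) := T in
  [forall u, forall v, [&& u != r, v != r & p u < p v] ==> (u < v)].

Definition in_L n (T : LTree n) : bool :=
  [&& is_rooted_tree T, increasing_to_root T & children_ordered T].

Definition children n (T : LTree n) (v : 'I_n.+1) : seq 'I_n.+1 :=
  [seq u <- enum 'I_n.+1 | (u != T.1) && (T.2 u == v)].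

(* the subtree at v, children ordered by labels, labels forgotten;
   [fuel] bounds the depth (n+1 suffices for trees on n+1 vertices) *)
Fixpoint forget_aux n (T : LTree n) (fuel : nat) (v : 'I_n.+1) : otree :=
  match fuel with
  | 0 => ONode [::]
  | f.+1 => ONode (map (forget_aux T f) (children T v))
  end.

Definition forget n (T : LTree n) : otree := forget_aux T n.+1 T.1.

(* Main.v *)
Require Import Defs.
From mathcomp Require Import all_boot zify.
Set Implicit Arguments. Unset Strict Implicit. Unset Printing Implicit Defensive.


Definition step (c : nat) (Q : seq otree) := drop c Q ++ [:: ONode (take c Q)].
Definition build (cs : seq nat) (Q : seq otree) := foldl (fun Q c => step c Q) Q cs.
Fixpoint valid (cs : seq nat) (Q : seq otree) : bool :=
  if cs is c :: cs' then (c <= size Q) && valid cs' (step c Q) else true.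
Fixpoint unbuild (f : nat) (R : seq otree) : seq nat :=
  match f with 0 => [::] | f'.+1 =>
    match R with [::] => [::] | ONode ts :: R' => size ts :: unbuild f' (R' ++ rev ts) end end.
Definition ttotal (R : seq otree) := sumn (map osize R).

Lemma build_cons c cs Q : build (c :: cs) Q = build cs (step c Q).
Proof. by []. Qed.

Lemma build_rcons cs c Q : build (rcons cs c) Q = step c (build cs Q).
Proof. by rewrite /build foldl_rcons. Qed.

Lemma valid_rcons cs c Q : valid (rcons cs c) Q = valid cs Q && (c <= size (build cs Q)).
Proof.
elim: cs Q => [|x cs IH] Q /=; first by rewrite andbT.
by rewrite IH andbA.
Qed.

Lemma size_step c Q : c <= size Q -> size (step c Q) = size Q - c + 1.
Proof. by move=> h; rewrite /step size_cat size_drop. Qed.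

Lemma total_step c Q : ttotal (step c Q) = (ttotal Q).+1.
Proof.
rewrite /step /ttotal map_cat sumn_cat /= -{3}(cat_take_drop c Q) map_cat sumn_cat.
lia.
Qed.

Lemma total_build cs Q : ttotal (build cs Q) = ttotal Q + size cs.
Proof.
elim: cs Q => [|c cs IH] Q; first by rewrite addn0.
by rewrite build_cons IH total_step /= addnS addSn.
Qed.

Lemma size_build cs Q : valid cs Q -> size (build cs Q) + sumn cs = size Q + size cs.
Proof.
elim: cs Q => [|c cs IH] Q; first by rewrite /= !addn0.
move=> /andP[h1 h2]; rewrite build_cons /=.
have := IH _ h2; rewrite size_step //; lia.
Qed.

Lemma valid_prefix cs Q : valid cs Q -> forall v, v < size cs -> sumn (take v.+1 cs) <= size Q + v.
Proof.
elim: cs Q => [|c cs IH] Q //= /andP[h1 h2] [|v] hv /=.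
  by rewrite take0 /= ?addn0; lia.
have := IH _ h2 v hv; rewrite size_step //; lia.
Qed.

Lemma osize_gt0 t : 0 < osize t.
Proof. by case: t. Qed.

Lemma unbuild_spec f R : ttotal R <= f ->
  [/\ valid (rev (unbuild f R)) [::], build (rev (unbuild f R)) [::] = rev R
    & size (unbuild f R) = ttotal R].
Proof.
elim: f R => [|f IH] R.
  case: R => [|t R] //=; rewrite /ttotal /= => h; have := osize_gt0 t; lia.
case: R => [|[ts] R] //= h.
have ht : ttotal (R ++ rev ts) = ttotal R + ttotal ts.
  by rewrite /ttotal map_cat sumn_cat map_rev sumn_rev.
have h' : ttotal (R ++ rev ts) <= f.
  by move: h; rewrite ht /ttotal /=; lia.
have [v b s] := IH _ h'.
rewrite rev_cons valid_rcons build_rcons v b rev_cat revK /= size_cat leq_addr.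
split => //.
+ rewrite /step drop_size_cat // take_size_cat // rev_cons cats1 //.
+ by rewrite s ht /ttotal /=; lia.
Qed.

Lemma unbuild_build cs : valid cs [::] -> unbuild (size cs) (rev (build cs [::])) = rev cs.
Proof.
elim/last_ind: cs => [|cs c IH] //.
rewrite valid_rcons => /andP[v h].
rewrite size_rcons build_rcons rev_rcons /step rev_cat /=.
rewrite -rev_cat cat_take_drop IH // size_takel //.
Qed.

Lemma eq_from_psum (s1 s2 : seq nat) : size s1 = size s2 ->
  (forall v, v <= size s1 -> sumn (take v s1) = sumn (take v s2)) -> s1 = s2.
Proof.
elim: s1 s2 => [|x s1 IH] [|y s2] //= [hs] h.
have := h 1 isT; rewrite /= !take0 /= !addn0 => exy; subst y.
congr (_ :: _); apply: IH => // v hv.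
have := h v.+1; rewrite /= ltnS => /(_ hv) ; lia.
Qed.

Lemma psum_mono (s : seq nat) v w : v <= w -> sumn (take v s) <= sumn (take w s).
Proof. by move=> h; rewrite -(subnKC h) takeD sumn_cat leq_addr. Qed.

Lemma iota_cut v N : v <= N -> iota 0 N = iota 0 v ++ iota v (N - v).
Proof. by move=> h; rewrite -{1}(subnKC h) iotaD add0n. Qed.

Lemma filter_iota_cut (P : pred nat) v N : v <= N -> (forall i, v <= i -> i < N -> ~~ P i) ->
  [seq i <- iota 0 N | P i] = [seq i <- iota 0 v | P i].
Proof.
move=> h hP; rewrite (iota_cut h) filter_cat.
have -> : [seq i <- iota v (N - v) | P i] = [::]; last by rewrite cats0.
rewrite (@eq_in_filter _ _ pred0) ?filter_pred0 // => i.
rewrite mem_iota subnKC // => /andP[h1 h2]; exact/negbTE/hP.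
Qed.

Lemma iotaSr N : iota 0 N.+1 = iota 0 N ++ [:: N].
Proof. by rewrite -addn1 iotaD. Qed.

Lemma prefix_count (P : pred nat) N : (forall i j, i <= j -> j < N -> P j -> P i) ->
  forall i, i < N -> P i = (i < count P (iota 0 N)).
Proof.
elim: N => [|N IH] hP i hi //.
rewrite iotaSr count_cat /= addn0.
case hN: (P N).
- have hall : forall j, j <= N -> P j by move=> j hj; apply: (hP j N).
  rewrite (@eq_in_count _ _ predT) ?count_predT ?size_iota; last first.
    by move=> j; rewrite mem_iota => /andP[_ hj]; rewrite hall //; lia.
  by rewrite hall ?addn1 //.
- rewrite addn0; case: (ltngtP i N) => hiN.
  + apply: IH => // k j hkj hj; apply: hP => //; lia.
  + lia.
  + subst i; rewrite hN; apply/esym/negbTE; rewrite -leqNgt.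
    by apply: leq_trans (count_size _ _) _; rewrite size_iota.
Qed.

Lemma count_or (P Q : pred nat) s : (forall x, ~~ (P x && Q x)) ->
  count (fun x => P x || Q x) s = count P s + count Q s.
Proof.
move=> h; elim: s => [|x s IH] //=; rewrite IH.
by move: (h x); case: (P x); case: (Q x) => //= _; lia.
Qed.


Section Mono.
Variables (n : nat) (A : nat -> nat).
Hypothesis monoA : forall i j, i <= j -> j <= n -> A i <= A j.
Hypothesis gtA : forall i, i <= n -> i < A i.
Hypothesis leA : forall i, i < n -> A i <= n.

Definition chl v := [seq i <- iota 0 v | A i == v].
Definition rest v := [seq i <- iota 0 v | v < A i].
Definition qidx v := [seq i <- iota 0 v | v <= A i].
Definition cnt v := size (chl v).
Definition csA := map cnt (iota 0 n.+1).

Lemma filter_split L v : sorted leq (map A L) ->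
  [seq i <- L | v <= A i] = [seq i <- L | A i == v] ++ [seq i <- L | v < A i].
Proof.
elim: L => [|x L IH] //= hs.
have hs' : sorted leq (map A L) by move: hs; case: (map A L) => //= y l /andP[].
have hall : all (leq (A x)) (map A L) by apply: order_path_min => //; exact: leq_trans.
case: (ltngtP (A x) v) => hx; [by rewrite IH | | by rewrite IH].
have -> : [seq i <- L | A i == v] = [::].
  rewrite (@eq_in_filter _ _ pred0) ?filter_pred0 // => i hi.
  have := allP hall (A i) (map_f A hi); rewrite /=; lia.
have -> // : [seq i <- L | v <= A i] = [seq i <- L | v < A i].
apply: eq_in_filter => i hi; have := allP hall (A i) (map_f A hi); lia.
Qed.

Lemma sortedA v : v <= n.+1 -> sorted leq (map A (iota 0 v)).
Proof.
move=> hv; apply: (@homo_sorted_in _ _ (fun i => i < v)); last exact: iota_sorted.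
  move=> i j hi hj hij; apply: monoA => //; move: hj; rewrite /= => hj; lia.
by apply/allP => i; rewrite mem_iota.
Qed.

Lemma qidx_split v : v <= n -> qidx v = chl v ++ rest v.
Proof. by move=> hv; apply: filter_split; apply: sortedA; lia. Qed.

Lemma qidx_succ v : v <= n -> qidx v.+1 = rest v ++ [:: v].
Proof.
move=> hv; rewrite /qidx iotaSr filter_cat /= gtA //.
Qed.

Lemma qidx_last : qidx n.+1 = [:: n].
Proof.
rewrite /qidx iotaSr filter_cat /= gtA //.
rewrite (@eq_in_filter _ _ pred0) ?filter_pred0 // => i; rewrite mem_iota => /andP[_ hi].
by have := leA hi; rewrite /=; lia.
Qed.

Lemma cnt_full v : v <= n -> cnt v = count (fun i => A i == v) (iota 0 n.+1).
Proof.
move=> hv; rewrite /cnt /chl -size_filter (@filter_iota_cut _ v n.+1 (leqW hv)) //.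
move=> i h1 h2; have := @gtA i; rewrite /=; lia.
Qed.

Lemma count_lt_aux v : v <= n.+1 -> count (fun i => A i < v) (iota 0 n.+1) = sumn (map cnt (iota 0 v)).
Proof.
elim: v => [|v IH] hv.
  by rewrite (@eq_count _ _ pred0) ?count_pred0 // => i; rewrite ltn0.
rewrite (@eq_count _ _ (fun i => (A i == v) || (A i < v))); last first.
  by move=> i; rewrite ltnS leq_eqVlt.
rewrite count_or; last by move=> i; apply/negP => /andP[/eqP -> ]; rewrite ltnn.
rewrite IH ?(ltnW hv) // (iotaSr v) map_cat sumn_cat -cnt_full // [sumn [:: _]]/= addn0 addnC //.
Qed.

Lemma count_lt v : v <= n.+1 -> count (fun i => A i < v) (iota 0 n.+1) = sumn (take v csA).
Proof.
move=> hv; rewrite count_lt_aux // /csA -map_take take_iota.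
by rewrite (minn_idPl hv).
Qed.

Lemma size_csA : size csA = n.+1.
Proof. by rewrite size_map size_iota. Qed.

End Mono.


Section Trees.
Variable n : nat.

Definition AT (T : LTree n) i := if i < n then val (T.2 (inord i) : 'I_n.+1) else n.+1.

Lemma ord_max_inord : (ord_max : 'I_n.+1) = inord n.
Proof. by apply: val_inj; rewrite /= inordK. Qed.

Lemma inord_neq_max i : i < n -> (inord i : 'I_n.+1) != ord_max.
Proof. by move=> h; apply/eqP => /(congr1 val); rewrite /= inordK; lia. Qed.

Lemma inL_root (T : LTree n) : in_L T -> T.1 = ord_max.
Proof.
case: T => r p /and3P[_ /forallP hi _] /=.
case: (r =P ord_max) => // hne; exfalso.
have hn : ord_max != r by apply/eqP => e; apply: hne; rewrite e.
have := hi ord_max; rewrite hn /= => h.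
by have := ltn_ord (p ord_max); rewrite ltnS leqNgt h.
Qed.

Lemma AT_le (T : LTree n) i : AT T i <= n.+1.
Proof. rewrite /AT; case: ifP => // _; exact: ltnW (ltn_ord _). Qed.

Lemma inL_props (T : LTree n) : in_L T ->
  [/\ (forall i j, i <= j -> j <= n -> AT T i <= AT T j),
      (forall i, i <= n -> i < AT T i) & (forall i, i < n -> AT T i <= n)].
Proof.
move=> HT; have hr := inL_root HT.
case: T hr HT => r p /= -> /and3P[_ /forallP hi /forallP ho].
split.
- move=> i j hij hj; rewrite /AT; case: (ltnP j n) => hjn.
  + have hin : i < n by lia.
    rewrite hin /=.
    have := ho (inord j); move/forallP/(_ (inord i)).
    rewrite !inord_neq_max //= !inordK; try lia.
  + case: ifP => // _; exact: ltnW (ltn_ord _).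
- move=> i hi'; rewrite /AT; case: ifP => // h.
  have := hi (inord i); rewrite (inord_neq_max h) /= inordK; last lia. by move=> ?; lia.
- by move=> i h; rewrite /AT h /= -ltnS ltn_ord.
Qed.

Lemma fuel_indep (T : LTree n) : in_L T -> forall f g (u : 'I_n.+1),
  u < f -> u < g -> forget_aux T f u = forget_aux T g u.
Proof.
case: T => r p /and3P[_ /forallP hi _].
elim=> [|f IH] [|g] u //= hf hg.
congr ONode; apply/eq_in_map => w; rewrite mem_filter => /andP[/andP[hne /eqP hp] _].
have := hi w; rewrite hne hp /= => hw.
apply: IH; lia.
Qed.

Lemma enum_inord : enum 'I_n.+1 = map inord (iota 0 n.+1).
Proof.
apply: (inj_map val_inj); rewrite val_enum_ord -map_comp.
rewrite -[LHS]map_id; apply/eq_in_map => i; rewrite mem_iota /= => h.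
by rewrite inordK.
Qed.

Lemma children_eq (T : LTree n) v : in_L T -> v <= n ->
  children T (inord v) = map inord (chl (AT T) v).
Proof.
move=> HT hv; have [hm hg hl] := inL_props HT.
rewrite /children enum_inord filter_map; congr map.
rewrite /chl -(@filter_iota_cut _ v n.+1); last first.
  by move=> i h1 h2; have := hg i; rewrite /=; lia.
  by lia.
apply: eq_in_filter => i; rewrite mem_iota => /andP[_ hi].
rewrite /= inL_root // /AT; case: ltnP => h.
- rewrite inord_neq_max //= -val_eqE /= inordK //.
- have -> : i = n by lia.
  by rewrite -ord_max_inord eqxx /=; apply/esym/negbTE; lia.
Qed.

Definition sub (T : LTree n) i := forget_aux T i.+1 (inord i).

Lemma sub_eq (T : LTree n) v : in_L T -> v <= n ->
  sub T v = ONode (map (sub T) (chl (AT T) v)).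
Proof.
move=> HT hv; rewrite /sub /= children_eq // -map_comp; congr ONode.
apply/eq_in_map => i; rewrite mem_filter mem_iota => /andP[_ /andP[_ hi]].
change (forget_aux T v (inord i) = forget_aux T i.+1 (inord i)).
apply: fuel_indep => //; rewrite inordK; lia.
Qed.

Lemma step_Q (T : LTree n) v : in_L T -> v <= n ->
  step (cnt (AT T) v) (map (sub T) (qidx (AT T) v)) = map (sub T) (qidx (AT T) v.+1).
Proof.
move=> HT hv; have [hm hg hl] := inL_props HT.
rewrite (qidx_split hm) // (qidx_succ hg) // map_cat /step /cnt.
rewrite take_size_cat ?size_map // drop_size_cat ?size_map //.
by rewrite map_cat /= -sub_eq.
Qed.

Lemma build_Q (T : LTree n) k : in_L T -> k <= n.+1 ->
  valid (map (cnt (AT T)) (iota 0 k)) [::] /\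
  build (map (cnt (AT T)) (iota 0 k)) [::] = map (sub T) (qidx (AT T) k).
Proof.
move=> HT; have [hm hg hl] := inL_props HT.
elim: k => [|k IH] hk //.
have [v b] := IH (ltnW hk).
rewrite (iotaSr k) map_cat cats1 valid_rcons build_rcons v b /=.
rewrite step_Q // size_map (qidx_split hm) // /cnt size_cat leq_addr //.
Qed.

Lemma build_forget (T : LTree n) : in_L T ->
  valid (csA n (AT T)) [::] /\ build (csA n (AT T)) [::] = [:: forget T].
Proof.
move=> HT; have [hm hg hl] := inL_props HT.
have [v b] := build_Q HT (leqnn n.+1).
split => //; rewrite b (qidx_last hg hl) /= /forget inL_root // ord_max_inord //.
Qed.

End Trees.


Lemma count_iota_lt m N : m <= N -> count (fun i => i < m) (iota 0 N) = m.
Proof.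
move=> h; rewrite (iota_cut h) count_cat.
rewrite (@eq_in_count _ _ predT) ?count_predT ?size_iota; last first.
  by move=> i; rewrite mem_iota.
rewrite (@eq_in_count _ (fun i => i < m) pred0) ?count_pred0 ?addn0 //.
by move=> i; rewrite mem_iota /=; lia.
Qed.

Section Surj.
Variables (n : nat) (cs : seq nat).
Hypothesis hsz : size cs = n.+1.
Hypothesis hsum : sumn cs = n.
Hypothesis hpre : forall v, v <= n -> sumn (take v.+1 cs) <= v.

Let M v := sumn (take v cs).

Lemma M_full : M n.+1 = n.
Proof. by rewrite /M take_oversize ?hsz. Qed.

Lemma M_mono v w : v <= w -> M v <= M w.
Proof. exact: psum_mono. Qed.

Lemma M_le v : M v <= n.
Proof.
case: (leqP v n.+1) => h; first by rewrite -M_full; exact: M_mono.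
by rewrite /M take_oversize ?hsz ?hsum //; lia.
Qed.

Definition acs i := count (fun v => M v.+1 <= i) (iota 0 n.+1).

Lemma acs_gt i : i < n -> i < acs i.
Proof.
move=> hi; rewrite /acs (@iota_cut i.+1 n.+1) ?count_cat; last lia.
rewrite (@eq_in_count _ _ predT) ?count_predT ?size_iota; first lia.
move=> v; rewrite mem_iota /= => hv; have := hpre (v := v); rewrite /M; lia.
Qed.

Lemma acs_le i : i < n -> acs i <= n.
Proof.
move=> hi; rewrite /acs iotaSr count_cat /= M_full.
have := count_size (fun v => M v.+1 <= i) (iota 0 n); rewrite size_iota; lia.
Qed.

Lemma acs_mono i j : i <= j -> acs i <= acs j.
Proof. by move=> h; apply: sub_count => v /= hv; lia. Qed.

Definition Tc : LTree n :=
  (ord_max, [ffun u : 'I_n.+1 => if u < n then inord (acs u) else ord_max]).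

Lemma AT_Tc i : AT Tc i = if i < n then acs i else n.+1.
Proof.
rewrite /AT /=; case: ifP => // h.
by rewrite ffunE inordK ?h ?inordK //; [rewrite ltnS; exact: acs_le | lia].
Qed.

Lemma Tc_p_ge (x : 'I_n.+1) : minn x.+1 n <= Tc.2 x.
Proof.
rewrite /= ffunE; case: ifP => h /=.
  by rewrite inordK; [have := acs_gt h; lia | rewrite ltnS; exact: acs_le].
lia.
Qed.

Lemma Tc_iter k (v : 'I_n.+1) : minn (v + k) n <= iter k Tc.2 v.
Proof.
elim: k => [|k IH]; first by rewrite /= addn0 geq_minl.
rewrite iterS; have := Tc_p_ge (iter k Tc.2 v).
move: IH; set x := iter k Tc.2 v; set y := Tc.2 x; lia.
Qed.

Lemma Tc_inL : in_L Tc.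
Proof.
apply/and3P; split.
- rewrite /is_rooted_tree /Tc; apply/andP; split.
    by rewrite ffunE ltnn.
  apply/forallP => v; apply/eqP/val_inj => /=.
  have := Tc_iter n v; have := ltn_ord (iter n Tc.2 v); rewrite /=; lia.
- apply/forallP => v; apply/implyP => hv /=.
  have hvn : v < n.
    by have := ltn_ord v; move: hv; rewrite -val_eqE /=; lia.
  by rewrite ffunE hvn inordK; [exact: acs_gt | rewrite ltnS; exact: acs_le].
- apply/forallP => u; apply/forallP => v; apply/implyP => /and3P[hu hv].
  have hun : u < n by have := ltn_ord u; move: hu; rewrite -val_eqE /=; lia.
  have hvn : v < n by have := ltn_ord v; move: hv; rewrite -val_eqE /=; lia.
  rewrite !ffunE hun hvn !inordK; try (rewrite ltnS; exact: acs_le).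
  rewrite ltnNge => h; rewrite ltnNge; apply/negP => hle.
  by move/negP: h; apply; apply: acs_mono.
Qed.

Lemma Tc_lt i v : i <= n -> v <= n.+1 -> (AT Tc i < v) = (i < M v).
Proof.
move=> hi hv; rewrite AT_Tc; case: ifP => hin.
- case: v hv => [|w] hw.
    by rewrite ltn0 /M take0.
  have hP : forall a b, a <= b -> b < n.+1 -> M b.+1 <= i -> M a.+1 <= i.
    by move=> a b hab _ h; apply: leq_trans h; apply: M_mono.
  have := prefix_count hP hw; rewrite -/(acs i) => e.
  rewrite ltnS leqNgt -e; lia.
- have -> : i = n by lia.
  have := M_le v; lia.
Qed.

Lemma Tc_cs : csA n (AT Tc) = cs.
Proof.
have [hm hg hl] := inL_props Tc_inL.
apply: eq_from_psum; first by rewrite size_csA hsz.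
rewrite size_csA => v hv.
rewrite -(count_lt hg hv).
rewrite (@eq_in_count _ _ (fun i => i < M v)); last first.
  by move=> i; rewrite mem_iota => /andP[_ h]; apply: Tc_lt.
by rewrite count_iota_lt //; have := M_le v; lia.
Qed.

End Surj.


Theorem corollary3p8 (n : nat) :
  (forall T : LTree n, in_L T -> in_T n (forget T)) /\
  (forall T1 T2 : LTree n, in_L T1 -> in_L T2 -> forget T1 = forget T2 -> T1 = T2) /\
  (forall t : otree, in_T n t -> exists2 T : LTree n, in_L T & forget T = t).
Proof.
split; [|split].
- move=> T HT; have [v b] := build_forget HT.
  have h := total_build (csA n (AT T)) [::]; rewrite b size_csA in h.
  have e1 : ttotal [:: forget T] = osize (forget T).
    by rewrite /ttotal /= addn0.
  by rewrite /in_T -e1 h.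
- move=> T1 T2 H1 H2 e.
  have [v1 b1] := build_forget H1; have [v2 b2] := build_forget H2.
  have u1 := unbuild_build v1; have u2 := unbuild_build v2.
  rewrite b1 size_csA e in u1; rewrite b2 size_csA in u2.
  have ecs : csA n (AT T1) = csA n (AT T2).
    by rewrite -(revK (csA n (AT T1))) -u1 u2 revK.
  have [hm1 hg1 hl1] := inL_props H1; have [hm2 hg2 hl2] := inL_props H2.
  have key : forall v, v <= n.+1 -> forall i, i <= n -> (AT T1 i < v) = (AT T2 i < v).
    move=> v hv i hi.
    have hP1 : forall a b, a <= b -> b < n.+1 -> AT T1 b < v -> AT T1 a < v.
      by move=> a b hab hb h; apply: leq_ltn_trans h; apply: hm1.
    have hP2 : forall a b, a <= b -> b < n.+1 -> AT T2 b < v -> AT T2 a < v.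
      by move=> a b hab hb h; apply: leq_ltn_trans h; apply: hm2.
    rewrite (prefix_count hP1) // (prefix_count hP2) //.
    by rewrite (count_lt hg1 hv) (count_lt hg2 hv) ecs.
  have eA : forall i, i < n -> AT T1 i = AT T2 i.
    move=> i hi; apply/eqP; rewrite eqn_leq.
    have k1 := key (AT T1 i).+1 (hl1 i hi) i (ltnW hi); rewrite !ltnS leqnn in k1.
    have k2 := key (AT T2 i).+1 (hl2 i hi) i (ltnW hi); rewrite !ltnS leqnn in k2.
    by rewrite k2 -k1.
  have r1 := inL_root H1; have r2 := inL_root H2.
  clear -H1 H2 r1 r2 eA; move: r1 r2 H1 H2 eA; case: T1 => [r p1]; case: T2 => [r' p2] /= -> -> H1 H2 eA.
  congr pair; apply/ffunP => u.
  case: (ltnP u n) => hu.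
  + have := eA u hu; rewrite /AT hu /= inord_val => h; exact: val_inj.
  + have -> : u = ord_max by apply: val_inj => /=; have := ltn_ord u; lia.
    move: H1 H2 => /and3P[/andP[/eqP -> _] _ _] /and3P[/andP[/eqP -> _] _ _] //.
- move=> t ht.
  have htot : ttotal [:: t] <= n.+1 by rewrite /ttotal /= addn0 ht.
  have [v b s] := unbuild_spec htot.
  set cs := rev (unbuild n.+1 [:: t]) in v b.
  have hsz : size cs = n.+1 by rewrite size_rev s /ttotal /= addn0 ht.
  have hsum : sumn cs = n.
    by have := size_build v; rewrite b hsz /=; lia.
  have hpre : forall w, w <= n -> sumn (take w.+1 cs) <= w.
    move=> w hw; have := valid_prefix v (v := w); rewrite hsz ltnS => /(_ hw).
    by rewrite /= add0n.
  have HT := Tc_inL hsz hsum hpre.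
  exists (Tc n cs) => //.
  have [_ bt] := build_forget HT.
  rewrite (Tc_cs hsz hsum hpre) b /= in bt.
  by case: bt.
Qed.
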